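(* Let $u,v$ be positive integers with $uv\equiv 0\pmod 6$. Then $\Phi(u\times v,4,2)\le\left\lfloor\frac{u}{4}\left(\left\lfloor\frac{uv-1}{3}\left\lfloor\frac{uv-2}{2}\right\rfloor\right\rfloor-1\right)\right\rfloor$.
   Context: A 2-D $(u\times v,4,2)$-OOC is a family $\mathcal C$ of $u\times v$ $(0,1)$-matrices of Hamming weight $4$ such that for all $A=(a_{ij}),B=(b_{ij})\in\mathcal C$ and integers $r$ with $A\ne B$ or $r\not\equiv0\pmod v$, $\sum_{i,j}a_{ij}b_{i,j+r}\le 2$ (column indices mod $v$). $\Phi(u\times v,4,2)$ is the largest size of such a code. *)

(* Defs.v *)
From mathcomp Require Import all_boot.
Set Implicit Arguments. Unset Strict Implicit. Unset Printing Implicit Defensive.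

(* A u x v (0,1)-matrix is represented by its support: a set of positions
   (i, j) : 'I_u * 'I_v with entry 1. Hamming weight = cardinality. *)
Definition mat (u v : nat) := {set 'I_u * 'I_v}.

Lemma ord_pos (v : nat) (j : 'I_v) : 0 < v.
Proof. by case: j => m Hm; apply: leq_ltn_trans Hm. Qed.

Definition shiftc (v : nat) (j : 'I_v) (r : nat) : 'I_v :=
  Ordinal (ltn_pmod (j + r) (ord_pos j)).

(* sum_{i,j} a_{ij} b_{i, j+r mod v} *)
Definition corr (u v : nat) (A B : mat u v) (r : nat) : nat :=
  #|[set p in A | (p.1, shiftc p.2 r) \in B]|.

(* A 2-D (u x v, 4, 2)-OOC: a family of weight-4 matrices with all
   auto- and cross-correlations (except the trivial ones) at most 2.
   Integer shifts r range over all of nat; since only r mod v matters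
   this covers all integers. *)
Definition is_OOC (u v : nat) (C : {set mat u v}) : Prop :=
  (forall A, A \in C -> #|A| = 4) /\
  (forall A B (r : nat), A \in C -> B \in C ->
      (A != B) || (r %% v != 0) -> corr A B r <= 2).

Definition OOC_bound (u v : nat) : nat :=
  (u * (((u * v - 1) * ((u * v - 2) %/ 2)) %/ 3 - 1)) %/ 4.

(* Main.v *)
Require Import Defs.
From mathcomp Require Import all_boot zify.
Set Implicit Arguments. Unset Strict Implicit. Unset Printing Implicit Defensive.

Lemma sumB (T : finType) (q p : pred T) :
  \sum_(i | q i) (p i : nat) = #|[set i | q i && p i]|.
Proof.
rewrite -sum1_card [RHS]big_mkcond /= [LHS]big_mkcond /=.
apply: eq_bigr => i _; rewrite inE; by case: (q i); case: (p i).
Qed.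

Lemma sum_le1 (T : finType) (q : pred T) (F : T -> nat) :
  (forall i, q i -> F i <= 1) -> \sum_(i | q i) F i <= #|[set i | q i]|.
Proof.
move=> H; rewrite -(muln1 #|_|) -sum_nat_cond_const; exact: leq_sum.
Qed.

Lemma arith6 N : N %% 6 = 0 -> 0 < N ->
  exists t, (N - 1) * ((N - 2) %/ 2) = 3 * t + 1.
Proof.
move=> h0 hp.
have [m ->] : exists m, N = 6 * m + 6.
  exists (N %/ 6 - 1). have := divn_eq N 6. rewrite h0. lia.
have -> : 6 * m + 6 - 1 = 6 * m + 5 by lia.
have -> : (6 * m + 6 - 2) %/ 2 = 3 * m + 2 by lia.
exists (6 * m * m + 9 * m + 3). nia.
Qed.

Section Core.
Variables (T I : finType) (K : {set I}) (B : I -> {set T}) (P : T).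
Hypothesis hB : forall k, k \in K -> P \in B k.
Hypothesis h4 : forall k, k \in K -> #|B k| = 4.
Hypothesis h2 : forall k k', k \in K -> k' \in K -> k != k' -> #|B k :&: B k'| <= 2.

Let r Q := #|[set k | (k \in K) && (Q \in B k)]|.
Let c Q R := #|[set k | ((k \in K) && (Q \in B k)) && (R \in B k)]|.

Lemma S1 : \sum_(Q | Q != P) r Q = 3 * #|K|.
Proof.
rewrite /r.
under eq_bigr => Q _ do rewrite -(sumB (mem K) (fun k => Q \in B k)).
rewrite exchange_big /= mulnC -sum_nat_const.
apply: eq_bigr => k hk.
rewrite (sumB (fun Q => Q != P) (fun Q => Q \in B k)).
have -> : [set i | (i != P) && (i \in B k)] = B k :\ P.
  by apply/setP => x; rewrite !inE.
by have := cardsD1 P (B k); rewrite h4 // hB // add1n => -[->].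
Qed.

Lemma S2 Q : Q != P ->
  \sum_(R | (R != P) && (R != Q)) c Q R = 2 * r Q.
Proof.
move=> hQ; rewrite /c /r.
under eq_bigr => R _ do rewrite -(sumB (fun k => (k \in K) && (Q \in B k)) (fun k => R \in B k)).
rewrite exchange_big /= mulnC -sum_nat_cond_const.
apply: eq_bigr => k /andP [hk hQk].
rewrite (sumB (fun R => (R != P) && (R != Q)) (fun R => R \in B k)).
have -> : [set i | ((i != P) && (i != Q)) && (i \in B k)] = (B k :\ P) :\ Q.
  by apply/setP => x; rewrite !inE; case: (x == P); case: (x == Q); case: (x \in B k).
have := cardsD1 P (B k); rewrite h4 // hB // => e1.
have := cardsD1 Q (B k :\ P); rewrite !inE hQ hQk /= => e2.
lia.
Qed.

Lemma S3 Q R : Q != P -> R != P -> Q != R -> c Q R <= 1.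
Proof.
move=> hQ hR hQR; rewrite leqNgt; apply/negP => /card_gt1P [k [k' [hk hk' hne]]].
move: hk hk'; rewrite !inE => /andP [/andP [hk hQk] hRk] /andP [/andP [hk' hQk'] hRk'].
have := h2 hk hk' hne.
have hsub : [set P; Q; R] \subset B k :&: B k'.
  apply/subsetP => x; rewrite !inE => /orP [/orP [] | ] /eqP ->;
  rewrite ?hB ?hQk ?hQk' ?hRk ?hRk' //.
have := subset_leq_card hsub.
rewrite -setUA cardsU1 cards2 !inE hQR.
rewrite (eq_sym P Q) (negbTE hQ) (eq_sym P R) (negbTE hR) /=. lia.
Qed.

Variable N : nat.
Hypothesis hNT : #|T| = N.

Lemma cardPQ Q : Q != P -> #|[set R | (R != P) && (R != Q)]| = N - 2.
Proof.
move=> hQ.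
have -> : [set R | (R != P) && (R != Q)] = [set~ P] :\ Q.
  by apply/setP => x; rewrite !inE andbC.
have := cardsD1 Q [set~ P]; rewrite cardsC1 !inE hQ /=.
rewrite hNT -subn1; lia.
Qed.

Lemma U1 Q : Q != P -> 2 * r Q <= N - 2.
Proof.
move=> hQ; rewrite -S2 // -(cardPQ hQ).
apply: sum_le1 => R /andP [hRP hRQ]; apply: S3 => //; by rewrite eq_sym.
Qed.

Lemma U2 Q R : Q != P -> R != P -> R != Q -> c Q R = 0 -> 2 * r Q <= N - 3.
Proof.
move=> hQ hR hRQ hc; rewrite -S2 // (bigD1 R) /=; last by rewrite hR hRQ.
rewrite hc add0n.
have : #|[set i | ((i != P) && (i != Q)) && (i != R)]| = N - 3.
  have := cardsD1 R [set i | (i != P) && (i != Q)].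
  rewrite cardPQ // !inE hR hRQ /=.
  have -> : [set i | (i != P) && (i != Q)] :\ R = [set i | ((i != P) && (i != Q)) && (i != R)].
    by apply/setP => x; rewrite !inE andbC.
  lia.
move=> <-; apply: sum_le1 => x /andP [/andP [hxP hxQ] hxR]; apply: S3 => //; by rewrite eq_sym.
Qed.

Lemma E1 Q : Q != P -> (forall R, R != P -> R != Q -> 0 < c Q R) -> 2 * r Q = N - 2.
Proof.
move=> hQ hpos; rewrite -S2 // -(cardPQ hQ) -[RHS]muln1 -sum_nat_cond_const.
apply: eq_bigr => R /andP [hR hRQ].
have := S3 hQ hR; rewrite eq_sym => /(_ hRQ).
have := hpos R hR hRQ. lia.
Qed.

Lemma core : N %% 6 = 0 -> 0 < N ->
  #|K| <= ((N - 1) * ((N - 2) %/ 2)) %/ 3 - 1.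
Proof.
move=> h6 hN; have [t ht] := arith6 h6 hN; rewrite ht.
have hPT : #|[set Q | Q != P]| = N - 1.
  have -> : [set Q | Q != P] = [set~ P] by apply/setP => x; rewrite !inE.
  by rewrite cardsC1 hNT -subn1.
case: (boolP [exists Q, exists R, [&& Q != P, R != P, R != Q & c Q R == 0]]).
- move=> /existsP [Q /existsP [R /and4P [hQ hR hRQ /eqP hc]]].
  have hQR : Q != R by rewrite eq_sym.
  have h1 := U2 hQ hR hRQ hc.
  have hc' : c R Q = 0.
    rewrite /c -hc; apply: eq_card => x; rewrite !inE.
    by case: (x \in K); case: (Q \in B x); case: (R \in B x).
  have h1' := U2 hR hQ hQR hc'.
  have hS := S1.
  rewrite (bigD1 Q) //= (bigD1 R) /= in hS; last by rewrite hR.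
  have hrest : \sum_(i | (i != P) && (i != Q) && (i != R)) r i <=
      #|[set i | (i != P) && (i != Q) && (i != R)]| * ((N - 2) %/ 2).
    rewrite -sum_nat_cond_const; apply: leq_sum => i /andP [/andP [hi _] _].
    have := U1 hi; lia.
  have hcard : #|[set i | (i != P) && (i != Q) && (i != R)]| = N - 3.
    have := cardsD1 R [set i | (i != P) && (i != Q)].
    rewrite cardPQ // !inE hR hRQ /=.
    have -> : [set i | (i != P) && (i != Q)] :\ R = [set i | ((i != P) && (i != Q)) && (i != R)].
      by apply/setP => x; rewrite !inE andbC.
    lia.
  rewrite hcard in hrest.
  have := arith6 h6 hN; move=> _.
  have hN6 : 6 <= N by move: h6 hN; lia.
  have e : (N - 1) * ((N - 2) %/ 2) = (N - 3) * ((N - 2) %/ 2) + 2 * ((N - 2) %/ 2).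
    rewrite -mulnDl; congr (_ * _); lia.
  rewrite e in ht.
  have : 2 * ((N - 2) %/ 2) = N - 2 by lia.
  lia.
- rewrite negb_exists => /forallP hall.
  have hE : forall Q, Q != P -> r Q = (N - 2) %/ 2.
    move=> Q hQ; have := E1 hQ.
    have : (forall R, R != P -> R != Q -> 0 < c Q R).
      move=> R hR hRQ; move: (hall Q); rewrite negb_exists => /forallP /(_ R).
      rewrite hQ hR hRQ /= lt0n; by [].
    move=> H /(_ H); lia.
  have hS := S1.
  have hsum : \sum_(Q | Q != P) r Q = \sum_(Q | Q != P) ((N - 2) %/ 2).
    by apply: eq_bigr => Q hQ; rewrite hE.
  rewrite sum_nat_cond_const hPT in hsum.
  lia.
Qed.
End Core.

Lemma sumB' (T : finType) (A : {set T}) : \sum_i (i \in A : nat) = #|A|.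
Proof.
rewrite -sum1_card [RHS]big_mkcond /=; apply: eq_bigr => i _; by case: (i \in A).
Qed.

Definition sh u v (r : nat) (p : 'I_u * 'I_v) : 'I_u * 'I_v := (p.1, shiftc p.2 r).

Lemma shK u v a b (p : 'I_u * 'I_v) : sh a (sh b p) = sh (b + a) p.
Proof.
case: p => i j; congr pair; apply: val_inj => /=; by rewrite modnDml addnA.
Qed.

Lemma shE u v a b (p : 'I_u * 'I_v) : a = b %[mod v] -> sh a p = sh b p.
Proof.
move=> e; case: p => i j; congr pair; apply: val_inj => /=.
by rewrite -modnDmr e modnDmr.
Qed.

Lemma sh0 u v (p : 'I_u * 'I_v) : sh 0 p = p.
Proof.
case: p => i j; congr pair; apply: val_inj => /=; by rewrite addn0 modn_small.
Qed.

Lemma sh_inj u v r : injective (@sh u v r).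
Proof.
move=> p q e; have hv := ord_pos p.2.
have := congr1 (sh (v * r - r)) e; rewrite !shK subnKC ?leq_pmull //.
by rewrite !(@shE _ _ (v * r) 0) ?sh0 // modnMr mod0n.
Qed.

Theorem lemma5p1 (u v : nat) (C : {set mat u v}) :
  0 < u -> 0 < v -> u * v %% 6 = 0 -> is_OOC C -> #|C| <= OOC_bound u v.
Proof.
move=> hu hv h6 [hw hc].
pose K := [set k : (mat u v * 'I_v)%type | k.1 \in C].
pose B := fun k : (mat u v * 'I_v)%type => [set sh k.2 x | x in k.1].
have hB4 : forall k, k \in K -> #|B k| = 4.
  move=> k; rewrite inE => hk; rewrite /B card_imset; [exact: hw | exact: sh_inj].
have hB2 : forall k k', k \in K -> k' \in K -> k != k' -> #|B k :&: B k'| <= 2.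
  case=> A r [A' r']; rewrite !inE /= => hA hA' hne.
  pose s := r + (v - r').
  have sub : B (A, r) :&: B (A', r') \subset [set sh r x | x in [set p in A | sh s p \in A']].
    apply/subsetP => q; rewrite inE => /andP [/imsetP [p hp ->] /imsetP [p' hp' e]].
    apply/imsetP; exists p => //; rewrite inE hp /=.
    have -> : sh s p = p'; last by [].
    apply: (@sh_inj _ _ r'); rewrite shK -e; apply: shE.
    rewrite /s -addnA subnK; last exact: ltnW (ltn_ord r').
    by rewrite modnDr.
  apply: (leq_trans (subset_leq_card sub)); apply: (leq_trans (leq_imset_card _ _)).
  apply: hc => //.
  case: (eqVneq A A') => [eA|] //=; subst A'.
  have hrr : r != r' by move: hne; apply: contra => /eqP ->.
  have hab : (r : nat) != r' by [].
  apply/negP => hd; have : v %| s by [].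
  move=> /dvdnP [q hq]; move: hq hab; rewrite /s.
  have := ltn_ord r; have := ltn_ord r'.
  move: (nat_of_ord r) (nat_of_ord r') => a b ha hb hq /eqP hab.
  case: q hq => [|[|q]] hq; rewrite ?mulSn in hq; lia.
have hNT : #|{: 'I_u * 'I_v}| = u * v by rewrite card_prod !card_ord.
have hcore : forall P, #|[set k in K | P \in B k]| <=
    ((u * v - 1) * ((u * v - 2) %/ 2)) %/ 3 - 1.
  move=> P; apply: (@core _ _ [set k in K | P \in B k] B P _ _ _ (u * v) hNT h6).
  - by move=> k; rewrite inE => /andP [].
  - by move=> k /setIdP [hk _]; apply: hB4.
  - by move=> k k' /setIdP [hk _] /setIdP [hk' _]; apply: hB2.
  - by rewrite muln_gt0 hu.
have hdc : \sum_P #|[set k in K | P \in B k]| = \sum_(k in K) #|B k|.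
  under eq_bigr => P _ do rewrite -(sumB (mem K) (fun k => P \in B k)).
  rewrite exchange_big /=; apply: eq_bigr => k _; exact: sumB'.
have hK : #|K| = #|C| * v.
  have -> : K = setX C [set: 'I_v] by apply/setP => -[A r]; rewrite !inE andbT.
  by rewrite cardsX cardsT card_ord.
have h4K : \sum_(k in K) #|B k| = #|K| * 4.
  rewrite -sum_nat_const; apply: eq_bigr => k hk; exact: hB4.
have hle : \sum_(P : 'I_u * 'I_v) #|[set k in K | P \in B k]| <=
    \sum_(P : 'I_u * 'I_v) (((u * v - 1) * ((u * v - 2) %/ 2)) %/ 3 - 1).
  by apply: leq_sum => P _; apply: hcore.
rewrite hdc h4K hK sum_nat_const hNT in hle.
rewrite /OOC_bound leq_divRL // -(leq_pmul2r hv).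
move: hle; set J := (_ - 1); move=> hle.
lia.
Qed.
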